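(* Let $F\in SL(d,\mathbb{Z})$, acting on $\mathbb{T}^d$, be partially hyperbolic with invariant splitting $\mathbb{R}^d=S\oplus C\oplus U$. Suppose that for every smooth function $\varphi:\mathbb{T}^d\to\mathbb{R}$ with $\operatorname{PCF}_\gamma\varphi=0$ for every $su$-cycle $\gamma$ of $F$, there exist a function $u:\mathbb{T}^d\to\mathbb{R}$ and a constant $K$ with $\varphi(x)=u(Fx)-u(x)+K$ for all $x$. Then $F$ is Katznelson irreducible, i.e. $C\cap\mathbb{Z}^d=\{0\}$.
   Context: Partial hyperbolicity: for some metric, $\|F|_S\|<1$, $m(F|_U)>1$, $\|F|_S\|<m(F|_C)$, $m(F|_U)>\|F|_C\|$ ($m$ = conorm). The strong stable and unstable leaves of $F$ are $\mathcal{W}^{ss}(x)=x+S$, $\mathcal{W}^{uu}(x)=x+U$ (mod $\mathbb{Z}^d$). Holonomy functionals: for $x^+\in\mathcal{W}^{ss}(x)$, $\operatorname{Hol}_x^{x^+}\varphi=\sum_{n\ge0}(\varphi(F^nx)-\varphi(F^nx^+))$; for $x^-\in\mathcal{W}^{uu}(x)$, $\operatorname{Hol}_x^{x^-}\varphi=-\sum_{n\ge1}(\varphi(F^{-n}x)-\varphi(F^{-n}x^-))$. An $su$-cycle is $\gamma=(x_0,\dots,x_k)$ with $x_k=x_0$ and each $x_j\in\mathcal{W}^{ss}(x_{j-1})\cup\mathcal{W}^{uu}(x_{j-1})$; $\operatorname{PCF}_\gamma\varphi=\sum_{j=1}^k\operatorname{Hol}_{x_{j-1}}^{x_j}\varphi$.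 *)

(* Defs.v *)
From HB Require Import structures.
From mathcomp Require Import all_boot all_order all_algebra.
From mathcomp Require Import all_classical all_reals all_analysis.
Set Implicit Arguments. Unset Strict Implicit. Unset Printing Implicit Defensive.
Import Order.TTheory GRing.Theory Num.Theory.
Import numFieldNormedType.Exports.
Local Open Scope classical_set_scope.
Local Open Scope ring_scope.

(* Points of R^d are row vectors 'rV[R]_d; the torus T^d = R^d / Z^d is
   handled through Z^d-periodic functions on R^d.  A matrix F acts on a
   point x (a column vector in the paper) by x |-> x *m F^T. *)

Section Defs.
Variables (R : realType) (d : nat).
Implicit Types (x y v : 'rV[R]_d) (S C U : 'M[R]_d) (F : 'M[int]_d).

Definition Fr F : 'M[R]_d := map_mx (fun z : int => z%:~R) F.

Definition Fpow F (n : nat) x : 'rV[R]_d := x *m ((Fr F)^T ^+ n).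
Definition Finvpow F (n : nat) x : 'rV[R]_d := x *m ((invmx (Fr F))^T ^+ n).

Definition intvec x : Prop :=
  exists k : 'rV[int]_d, x = map_mx (fun z : int => z%:~R) k.

Definition Zperiodic (f : 'rV[R]_d -> R) : Prop :=
  forall x k, intvec k -> f (x + k) = f x.

Fixpoint dderiv (vs : seq 'rV[R]_d) (f : 'rV[R]_d -> R) : 'rV[R]_d -> R :=
  match vs with
  | [::] => f
  | v :: vs' => fun x => 'D_v (dderiv vs' f) x
  end.

Definition smooth (f : 'rV[R]_d -> R) : Prop :=
  forall vs : seq 'rV[R]_d,
    continuous (dderiv vs f) /\ (forall x v, derivable (dderiv vs f) x v).

(* constant Riemannian (inner product) metric given by a positive definite
   symmetric matrix G *)
Definition posdef (G : 'M[R]_d) : Prop :=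
  G^T = G /\ forall v, v != 0 -> 0 < (v *m G *m v^T) 0 0.

Definition gnorm (G : 'M[R]_d) v : R := Num.sqrt ((v *m G *m v^T) 0 0).

Definition unit_sphere (G : 'M[R]_d) S : set 'rV[R]_d :=
  [set v | (v <= S)%MS /\ gnorm G v = 1].

Definition restr_norm (G : 'M[R]_d) F (E : 'M[R]_d) : R :=
  sup [set gnorm G (v *m (Fr F)^T) | v in unit_sphere G E].
Definition restr_conorm (G : 'M[R]_d) F (E : 'M[R]_d) : R :=
  inf [set gnorm G (v *m (Fr F)^T) | v in unit_sphere G E].

(* F-invariant splitting R^d = S (+) C (+) U (subspaces = row spaces) *)
Definition invariant_splitting F S C U : Prop :=
  (S + C + U == 1%:M)%MS /\ mxdirect (S + C + U) /\
  (S *m (Fr F)^T <= S)%MS /\ (C *m (Fr F)^T <= C)%MS /\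
  (U *m (Fr F)^T <= U)%MS.

Definition partially_hyperbolic F S C U : Prop :=
  invariant_splitting F S C U /\
  S != 0 /\ C != 0 /\ U != 0 /\
  exists G : 'M[R]_d, posdef G /\
    restr_norm G F S < 1 /\ 1 < restr_conorm G F U /\
    restr_norm G F S < restr_conorm G F C /\
    restr_conorm G F U > restr_norm G F C.

Definition in_leaf (E : 'M[R]_d) x y : Prop :=
  exists v k, (v <= E)%MS /\ intvec k /\ y = x + v + k.

Definition HolS F (phi : 'rV[R]_d -> R) x xp : R :=
  limn (series (fun n => phi (Fpow F n x) - phi (Fpow F n xp))).
Definition HolU F (phi : 'rV[R]_d -> R) x xm : R :=
  - limn (series (fun n => phi (Finvpow F n.+1 x) - phi (Finvpow F n.+1 xm))).

(* an su-path from x: a list of legs (b, x_j); b = true: x_j is in the strong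
   stable leaf of x_{j-1}; b = false: in the strong unstable leaf *)
Fixpoint su_path S U x (legs : seq (bool * 'rV[R]_d)) : Prop :=
  match legs with
  | [::] => True
  | (b, y) :: l => in_leaf (if b then S else U) x y /\ su_path S U y l
  end.

Definition su_cycle S U x0 (legs : seq (bool * 'rV[R]_d)) : Prop :=
  su_path S U x0 legs /\ intvec (last x0 (map snd legs) - x0).

Fixpoint PCF F (phi : 'rV[R]_d -> R) x (legs : seq (bool * 'rV[R]_d)) : R :=
  match legs with
  | [::] => 0
  | (b, y) :: l => (if b then HolS F phi x y else HolU F phi x y) + PCF F phi y l
  end.

Definition katznelson_irreducible C : Prop :=
  forall k, intvec k -> (k <= C)%MS -> k = 0.

End Defs.

(* Main.v *)
Require Import Defs.
From HB Require Import structures.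
From mathcomp Require Import all_boot all_order all_algebra.
From mathcomp Require Import all_classical all_reals all_analysis.
Set Implicit Arguments. Unset Strict Implicit. Unset Printing Implicit Defensive.
Import Order.TTheory GRing.Theory Num.Theory.
Import numFieldNormedType.Exports.
Local Open Scope classical_set_scope.
Local Open Scope ring_scope.
From mathcomp Require Import lra ring zify.

Section Norm.
Variables (R : realType) (d : nat).
Implicit Types (v w : 'rV[R]_d) (G X : 'M[R]_d).

Definition Qf G v : R := (v *m G *m v^T) 0 0.

Lemma Qf_ge0 G v : posdef G -> 0 <= Qf G v.
Proof.
move=> [_ pG]; have [->|v0] := eqVneq v 0.
  by rewrite /Qf !mul0mx mxE.
exact/ltW/pG.
Qed.

Lemma trZ m n a (A : 'M[R]_(m, n)) : (a *: A)^T = a *: A^T.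
Proof. by apply/matrixP => i j; rewrite !mxE. Qed.

Lemma QfZ G a v : Qf G (a *: v) = a ^+ 2 * Qf G v.
Proof.
by rewrite /Qf trZ -!scalemxAl -scalemxAr scalerA mxE expr2.
Qed.

Lemma gnorm_sq G v : posdef G -> Defs.gnorm G v ^+ 2 = Qf G v.
Proof. by move=> pG; rewrite /Defs.gnorm sqr_sqrtr // Qf_ge0. Qed.

Lemma gnorm_ge0 G v : 0 <= Defs.gnorm G v.
Proof. exact: sqrtr_ge0. Qed.

Lemma gnorm_gt0 G v : posdef G -> v != 0 -> 0 < Defs.gnorm G v.
Proof. by move=> [_ pG] /pG h; rewrite /Defs.gnorm sqrtr_gt0. Qed.

Lemma gnormZ G a v : posdef G -> Defs.gnorm G (a *: v) = `|a| * Defs.gnorm G v.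
Proof.
move=> pG; rewrite /Defs.gnorm -/(Qf G _) QfZ sqrtrM ?sqrtr_sqr //.
exact: sqr_ge0.
Qed.

Lemma entry_le_norm v i : `|v 0 i| <= `|v|.
Proof.
rewrite -[`|v|]/(mx_norm v) mx_normrE.
exact: (le_bigmax _ (fun ij : 'I_1 * 'I_d => `|v ij.1 ij.2|) (0, i)).
Qed.

Lemma norm_le_entries v B : 0 <= B -> (forall i, `|v 0 i| <= B) -> `|v| <= B.
Proof.
move=> B0 h; rewrite -[`|v|]/(mx_norm v) mx_normrE.
apply: bigmax_le => // -[a b] _ /=; rewrite (ord1 a); exact: h.
Qed.

Lemma Qf_le G : exists M, 0 <= M /\ forall w, Qf G w <= M * `|w| ^+ 2.
Proof.
exists (\sum_j \sum_i `|G i j|); split.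
  by apply: sumr_ge0 => i _; apply: sumr_ge0.
move=> w; rewrite /Qf !mxE mulr_suml.
apply: le_trans (ler_norm _) _.
apply: le_trans (ler_norm_sum _ _ _) _.
apply: ler_sum => j _; rewrite !mxE normrM mulr_suml expr2 -mulr_suml mulrA.
have h2 := entry_le_norm w j.
apply: ler_pM => //.
apply: le_trans (ler_norm_sum _ _ _) _.
rewrite mulr_suml; apply: ler_sum => i _.
rewrite normrM mulrC; apply: ler_pM => //; exact: entry_le_norm.
Qed.

Lemma mulmx_norm_le X : exists N, 0 <= N /\ forall v, `|v *m X| <= N * `|v|.
Proof.
exists (\sum_i \sum_j `|X i j|); split.
  by apply: sumr_ge0 => i _; apply: sumr_ge0.
move=> v; apply: norm_le_entries => [|j].
  by rewrite mulr_ge0 // sumr_ge0 // => i _; apply: sumr_ge0.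
rewrite mxE; apply: le_trans (ler_norm_sum _ _ _) _.
rewrite mulr_suml; apply: ler_sum => i _.
rewrite normrM mulrC; apply: ler_pM => //; last exact: entry_le_norm.
rewrite (bigD1 j) //= lerDl; exact: sumr_ge0.
Qed.

Lemma continuous_sum_seq (I : Type) (r : seq I) (f : I -> 'rV[R]_d -> R) :
  (forall i, continuous (f i)) -> continuous (fun v => \sum_(i <- r) f i v).
Proof.
move=> cf; elim: r => [|i r IH].
  by under eq_fun do rewrite big_nil; exact: cst_continuous.
under eq_fun do rewrite big_cons.
by move=> x; apply: continuousD; [exact: cf|exact: IH].
Qed.

Lemma Qf_continuous G : continuous (Qf G).
Proof.
have -> : Qf G = fun v => \sum_j (\sum_i v 0 i * G i j) * v 0 j.
  by apply: funext => v; rewrite /Qf !mxE; apply: eq_bigr => j _; rewrite !mxE.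
apply: continuous_sum_seq => j x; apply: continuousM; last exact: coord_continuous.
apply: (@continuous_sum_seq _ (index_enum 'I_d) (fun i v => v 0 i * G i j) _ x) => i y.
apply: continuousM; [exact: coord_continuous|exact: cst_continuous].
Qed.

Lemma Qf_lb G : posdef G -> exists2 e, 0 < e & forall v, e * `|v| ^+ 2 <= Qf G v.
Proof.
move=> pG.
have [[v0 v01]|nA] := pselect (exists v0 : 'rV[R]_d, `|v0| = 1); last first.
  exists 1 => // v; have -> : v = 0.
    apply/eqP/negPn/negP => v0; apply: nA; exists (`|v|^-1 *: v).
    by rewrite normrZ normfV normr_id mulVf // normr_eq0.
  by rewrite normr0 expr0n mulr0 Qf_ge0.
pose A := [set v : 'rV[R]_d | `|v| = 1].
have cA : compact A.
  apply: bounded_closed_compact.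
    rewrite /bounded_near /=.
    apply: filterS (nbhs_pinfty_ge (r:=1) (num_real 1)) => M M1 v /= ->.
    exact: M1.
  apply: (@preimage_closed _ _ (fun v : 'rV[R]_d => `|v|) [set 1]).
    move=> x _; exact: norm_continuous.
  exact: closed_eq.
have [c cA' cmin] := @EVT_min_rV R d (Qf G) A (ex_intro _ v0 v01) cA
  (continuous_subspaceT (@Qf_continuous G)).
have c1 : `|c| = 1 by move: cA'; rewrite inE.
have c0 : c != 0 by apply/eqP => c0; move: c1; rewrite c0 normr0 => /eqP; rewrite eq_sym oner_eq0.
exists (Qf G c); first by have [_ h] := pG; exact: h.
move=> v; have [->|vn0] := eqVneq v 0.
  by rewrite normr0 expr0n mulr0 Qf_ge0.
have nv : `|v| != 0 by rewrite normr_eq0.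
have w1 : `| (`|v|^-1 *: v) | = 1 by rewrite normrZ normfV normr_id mulVf.
have -> : Qf G v = `|v| ^+ 2 * Qf G (`|v|^-1 *: v).
  by rewrite -QfZ scalerA mulfV // scale1r.
rewrite mulrC; apply: ler_wpM2l; first exact: sqr_ge0.
by apply: cmin; rewrite inE.
Unshelve. all: by end_near.
Qed.

Lemma gnorm_mul_le G X : posdef G ->
  exists K, 0 <= K /\ forall v, Defs.gnorm G (v *m X) <= K * Defs.gnorm G v.
Proof.
move=> pG; have [e e0 he] := Qf_lb pG; have [M [M0 hM]] := Qf_le G.
have [N [N0 hN]] := mulmx_norm_le X.
exists (Num.sqrt (M * N ^+ 2 / e)); split; first exact: sqrtr_ge0.
move=> v; rewrite /Defs.gnorm -sqrtrM; last by rewrite divr_ge0 ?mulr_ge0 ?sqr_ge0 // ltW.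
rewrite ler_sqrt; last by rewrite mulr_ge0 ?divr_ge0 ?mulr_ge0 ?sqr_ge0 ?Qf_ge0 // ltW.
apply: le_trans (hM _) _.
have h1 : `|v *m X| ^+ 2 <= (N * `|v|) ^+ 2.
  by rewrite ler_sqr ?nnegrE ?mulr_ge0 //; exact: hN.
have h2 : `|v| ^+ 2 <= Qf G v / e by rewrite ler_pdivlMr // mulrC.
apply: le_trans (ler_wpM2l M0 h1) _.
have -> : M * N ^+ 2 / e * (v *m G *m v^T) 0 0 = M * N ^+ 2 * (Qf G v / e).
  by rewrite /Qf; rewrite mulrAC -mulrA.
rewrite exprMn mulrA; apply: ler_wpM2l => //; by rewrite mulr_ge0 ?sqr_ge0.
Qed.

End Norm.

Lemma bern (R : realType) (t : R) n : 1 <= t -> 1 + n%:R * (t - 1) <= t ^+ n.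
Proof.
move=> t1; elim: n => [|n IH]; first by rewrite mul0r addr0 expr0.
rewrite exprS -natr1.
have h : 0 <= n%:R * (t - 1) :> R by rewrite mulr_ge0 // subr_ge0.
nra.
Qed.

Section Growth.
Variables (R : realType) (d : nat).
Implicit Types (v w x y : 'rV[R]_d) (G X A E : 'M[R]_d).

Lemma gnorm0 G : Defs.gnorm G (0 : 'rV[R]_d) = 0.
Proof. by rewrite /Defs.gnorm !mul0mx mxE sqrtr0. Qed.

Lemma norm_step G (F : 'M[int]_d) E v : posdef G -> (v <= E)%MS ->
  Defs.gnorm G (v *m (Fr R F)^T) <= restr_norm G F E * Defs.gnorm G v.
Proof.
move=> pG vE; have [->|v0] := eqVneq v 0; first by rewrite mul0mx gnorm0 mulr0.
have gp := gnorm_gt0 pG v0.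
have [K [K0 hK]] := gnorm_mul_le (Fr R F)^T pG.
set w := (Defs.gnorm G v)^-1 *: v.
have wS : unit_sphere G E w.
  split; first exact: scalemx_sub.
  by rewrite gnormZ // normfV gtr0_norm // mulVf // gt_eqF.
have ub : has_ubound [set Defs.gnorm G (v *m (Fr R F)^T) | v in unit_sphere G E].
  exists K => _ [u [_ u1] <-]; by apply: le_trans (hK u) _; rewrite u1 mulr1.
have := ub_le_sup ub (ex_intro2 _ _ w wS erefl).
rewrite /w -scalemxAl gnormZ // normfV gtr0_norm // -/(restr_norm G F E).
by rewrite ler_pdivrMl // mulrC.
Qed.

Lemma conorm_step G (F : 'M[int]_d) E v : posdef G -> (v <= E)%MS ->
  restr_conorm G F E * Defs.gnorm G v <= Defs.gnorm G (v *m (Fr R F)^T).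
Proof.
move=> pG vE; have [->|v0] := eqVneq v 0; first by rewrite mul0mx gnorm0 mulr0.
have gp := gnorm_gt0 pG v0.
set w := (Defs.gnorm G v)^-1 *: v.
have wS : unit_sphere G E w.
  split; first exact: scalemx_sub.
  by rewrite gnormZ // normfV gtr0_norm // mulVf // gt_eqF.
have lb : has_lbound [set Defs.gnorm G (v *m (Fr R F)^T) | v in unit_sphere G E].
  by exists 0 => _ [u _ <-]; exact: gnorm_ge0.
have := ge_inf lb (ex_intro2 _ _ w wS erefl).
rewrite /w -scalemxAl gnormZ // normfV gtr0_norm // -/(restr_conorm G F E).
by rewrite ler_pdivlMl // mulrC.
Qed.

Lemma growth_contra G X A E1 E2 x y (a b : R) : posdef G -> a < b ->
  (E1 *m A <= E1)%MS -> (E2 *m A <= E2)%MS ->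
  (forall v, (v <= E1)%MS -> Defs.gnorm G (v *m A) <= a * Defs.gnorm G v) ->
  (forall v, (v <= E2)%MS -> b * Defs.gnorm G v <= Defs.gnorm G (v *m A)) ->
  (x <= E1)%MS -> (y <= E2)%MS -> y != 0 ->
  (forall n, y *m A ^+ n = x *m A ^+ n *m X) -> False.
Proof.
move=> pG ab E1A E2A h1 h2 xE1 yE2 y0 hX.
have [K [K0 hK]] := gnorm_mul_le X pG.
have x0 : x != 0.
  by apply: contra y0 => /eqP x0; move: (hX 0%N); rewrite !expr0 !mulmx1 x0 mul0mx => ->.
have gx := gnorm_gt0 pG x0; have gy := gnorm_gt0 pG y0.
have pw1 : forall n, (x *m A ^+ n <= E1)%MS.
  elim=> [|n IH]; first by rewrite expr0 mulmx1.
  by rewrite exprSr mulmxA; apply: submx_trans (submxMr _ IH) E1A.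
have pw2 : forall n, (y *m A ^+ n <= E2)%MS.
  elim=> [|n IH]; first by rewrite expr0 mulmx1.
  by rewrite exprSr mulmxA; apply: submx_trans (submxMr _ IH) E2A.
have a0 : 0 <= a.
  have := h1 x xE1; have := gnorm_ge0 G (x *m A) => g1 g2.
  have : 0 <= a * Defs.gnorm G x by apply: le_trans g2.
  by rewrite pmulr_lge0.
have b0 : 0 < b by apply: le_lt_trans ab.
have up : forall n, Defs.gnorm G (x *m A ^+ n) <= a ^+ n * Defs.gnorm G x.
  elim=> [|n IH]; first by rewrite expr0 mulmx1 mul1r.
  rewrite exprSr mulmxA; apply: le_trans (h1 _ (pw1 n)) _.
  by rewrite exprS -mulrA ler_wpM2l.
have lo : forall n, b ^+ n * Defs.gnorm G y <= Defs.gnorm G (y *m A ^+ n).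
  elim=> [|n IH]; first by rewrite expr0 mulmx1 mul1r.
  rewrite [in X in _ <= X]exprSr mulmxA; apply: le_trans _ (h2 _ (pw2 n)).
  by rewrite exprS -mulrA ler_wpM2l // ltW.
have key : forall n, b ^+ n * Defs.gnorm G y <= K * (a ^+ n * Defs.gnorm G x).
  move=> n; apply: le_trans (lo n) _; rewrite hX.
  by apply: le_trans (hK _) _; apply: ler_wpM2l.
have [a00|ap] := eqVneq a 0.
  have := key 1%N; rewrite a00 expr1 mul0r mulr0 => h.
  have : 0 < b * Defs.gnorm G y by rewrite mulr_gt0.
  by rewrite ltNge h.
have ap' : 0 < a by rewrite lt_neqAle eq_sym ap a0.
set t := b / a.
have t1 : 1 <= t by rewrite /t ler_pdivlMr // mul1r ltW.
set c := K * Defs.gnorm G x / Defs.gnorm G y.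
have c0 : 0 <= c by rewrite /c divr_ge0 ?mulr_ge0 // ltW.
have tg : 0 < t - 1 by rewrite subr_gt0 /t ltr_pdivlMr // mul1r.
pose n := Num.Def.archi_bound (c / (t - 1)).
have hn := archi_boundP (divr_ge0 c0 (ltW tg)).
have := key n.
have : c < t ^+ n.
  apply: lt_le_trans (bern n t1); rewrite -/n.
  have : c < n%:R * (t - 1) by rewrite -ltr_pdivrMr.
  lra.
rewrite /t /c expr_div_n => h.
move=> h'.
move: h; rewrite ltr_pdivlMr ?exprn_gt0 // -(ltr_pM2r gy).
have -> : K * Defs.gnorm G x / Defs.gnorm G y * a ^+ n * Defs.gnorm G y = K * (a ^+ n * Defs.gnorm G x).
  by rewrite mulrAC divfK ?gt_eqF // mulrAC -mulrA.
by rewrite ltNge h'.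
Qed.

End Growth.

Section Alg.
Variables (K : fieldType) (n : nat).
Local Notation M := 'M[K]_n.+1.
Local Notation V := 'rV[K]_n.+1.
Implicit Types (A : M) (x y : V) (p q f g : {poly K}).

Definition ev x A p : V := x *m horner_mx A p.

Definition indep x A m := forall f, (size f <= m)%N -> ev x A f = 0 -> f = 0.

Lemma ev_mul x A p q : ev x A (p * q) = ev (ev x A p) A q.
Proof. by rewrite /ev rmorphM /= mulmxA. Qed.

Lemma ev_mulC x A p q : ev x A (p * q) = ev x A (q * p).
Proof. by rewrite mulrC. Qed.

Lemma ev_add x A p q : ev x A (p + q) = ev x A p + ev x A q.
Proof. by rewrite /ev rmorphD /= mulmxDr. Qed.

Lemma ev0 x A : ev x A 0 = 0.
Proof. by rewrite /ev rmorph0 mulmx0. Qed.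

Lemma ev1 x A : ev x A 1 = x.
Proof. by rewrite /ev rmorph1 mulmx1. Qed.

Lemma ev_zero A p : ev 0 A p = 0.
Proof. by rewrite /ev mul0mx. Qed.

Lemma ev_X x A k : ev x A 'X^k = x *m A ^+ k.
Proof. by rewrite /ev rmorphXn /= horner_mx_X. Qed.

Lemma ev_C x A c : ev x A c%:P = c *: x.
Proof. by rewrite /ev horner_mx_C mul_mx_scalar. Qed.

Lemma ev_sub m (N : 'M[K]_(m, n.+1)) (E : 'M[K]_n.+1) A p :
  (N <= E)%MS -> (E *m A <= E)%MS -> (N *m horner_mx A p <= E)%MS.
Proof.
move=> NE EA; elim/poly_ind: p => [|p c IH].
  by rewrite rmorph0 mulmx0 sub0mx.
rewrite rmorphD rmorphM /= horner_mx_X horner_mx_C mulmxDr mul_mx_scalar.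
rewrite addmx_sub // ?scalemx_sub //.
by rewrite mulmxA; apply: submx_trans (submxMr _ IH) EA.
Qed.

Lemma ev_expand x A p m : (size p <= m)%N ->
  ev x A p = \sum_(i < m) p`_i *: (x *m A ^+ i).
Proof.
move=> sp.
have e : p = \sum_(i < m) p`_i *: 'X^i.
  rewrite -poly_def; apply/polyP => k; rewrite coef_poly.
  by case: ltnP => // km; rewrite nth_default // (leq_trans sp km).
rewrite /ev {1}e linear_sum mulmx_sumr; apply: eq_bigr => i _.
by rewrite linearZ /= -scalemxAr rmorphXn /= horner_mx_X.
Qed.

Definition kry x A m : 'M[K]_(m, n.+1) := \matrix_(j < m) (x *m A ^+ j).

Lemma ev_kry x A p m : (size p <= m)%N ->
  ev x A p = (\row_(i < m) p`_i) *m kry x A m.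
Proof.
move=> sp; rewrite (ev_expand _ _ sp) mulmx_sum_row.
by apply: eq_bigr => i _; rewrite rowK mxE.
Qed.

Lemma indep_row_free x A m : indep x A m -> row_free (kry x A m).
Proof.
move=> hi; rewrite -kermx_eq0; apply/eqP/row_matrixP => i; rewrite row0.
set u := row i (kermx (kry x A m)).
have uK : u *m kry x A m = 0 by apply/sub_kermxP; exact: row_sub.
pose f := \poly_(j < m) (if insub j is Some jj then u 0 jj else 0).
have sf : (size f <= m)%N by exact: size_poly.
have f0 : f = 0.
  apply: hi => //; rewrite (ev_kry _ _ sf) -uK; congr (_ *m _).
  by apply/rowP => j; rewrite [in LHS]mxE coef_poly ltn_ord valK.
apply/rowP => j; rewrite [in RHS]mxE.
by have := congr1 (fun q : {poly K} => q`_j) f0; rewrite coef_poly ltn_ord valK coef0.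
Qed.

Lemma row_free_indep x A m : row_free (kry x A m) -> indep x A m.
Proof.
move=> rf f sf; rewrite (ev_kry _ _ sf) => h.
have : (\row_(i < m) f`_i <= kermx (kry x A m))%MS by apply/sub_kermxP.
move: rf; rewrite -kermx_eq0 => /eqP ->; rewrite submx0 => /eqP h0.
apply/polyP => k; rewrite coef0; case: (ltnP k m) => km.
  by have := congr1 (fun r : 'rV_m => r 0 (Ordinal km)) h0; rewrite !mxE.
by rewrite nth_default // (leq_trans sf km).
Qed.

Lemma min_annih x A f0 : f0 != 0 -> ev x A f0 = 0 ->
  exists p, [/\ p != 0, ev x A p = 0 &
    forall g, g != 0 -> ev x A g = 0 -> (size p <= size g)%N].
Proof.
move: {2}(size f0) (leqnn (size f0)) => N; elim: N f0 => [|N IH] f0.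
  by rewrite leqn0 size_poly_eq0 => /eqP -> /eqP.
move=> sN f00 ef0.
have [[g [g0 eg sg]]|ng] := pselect (exists g, [/\ g != 0, ev x A g = 0 & (size g < size f0)%N]).
  by apply: (IH g) => //; rewrite -ltnS (leq_trans sg).
exists f0; split => // g g0 eg; rewrite leqNgt; apply/negP => sg.
by apply: ng; exists g.
Qed.

Lemma min_indep x A p : p != 0 ->
  (forall g, g != 0 -> ev x A g = 0 -> (size p <= size g)%N) ->
  indep x A (size p).-1.
Proof.
move=> p0 hmin f sf ef; apply/eqP/negPn/negP => f0.
have := hmin f f0 ef; rewrite leqNgt; move/negP; apply.
rewrite (leq_ltn_trans sf) // prednK // lt0n size_poly_eq0 //.
Qed.

Lemma transport x y A p : p != 0 -> ev x A p = 0 -> ev y A p = 0 ->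
  indep x A (size p).-1 ->
  exists X : M, forall k, y *m A ^+ k = x *m A ^+ k *m X.
Proof.
move=> p0 ex ey hi; set m := (size p).-1.
have /row_freeP [B hB] := indep_row_free hi.
exists (B *m kry y A m) => k.
have red : forall z, ev z A p = 0 -> z *m A ^+ k = ev z A ('X^k %% p).
  move=> z ez; rewrite -ev_X {1}(divp_eq 'X^k p) ev_add ev_mulC ev_mul ez ev_zero.
  by rewrite add0r.
have sr : (size ('X^k %% p)%R <= m)%N.
  by rewrite /m -ltnS prednK ?ltn_modp // lt0n size_poly_eq0.
rewrite (red _ ex) (red _ ey) !(ev_kry _ _ sr) -!mulmxA (mulmxA (kry x A m)) hB.
by rewrite mul1mx.
Qed.

End Alg.

Section Core.
Variables (K : fieldType) (n : nat).
Implicit Types (A C : 'M[K]_n.+1) (x k : 'rV[K]_n.+1) (p q f g : {poly K}).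

Lemma core x k A C q : (k <= C)%MS -> (C *m A <= C)%MS -> q != 0 ->
  ev k A q = 0 -> indep k A (size q).-1 -> x != 0 -> ev x A q = 0 ->
  exists p c, [/\ p != 0, (c <= C)%MS, c != 0, ev x A p = 0 & ev c A p = 0]
    /\ (indep x A (size p).-1 /\ indep c A (size p).-1).
Proof.
move=> kC CA q0 ekq hk x0 exq.
have [p [p0 exp hmin]] := min_annih q0 exq.
have hx := min_indep p0 hmin.
have sp1 : (1 < size p)%N.
  rewrite ltnNge; apply/negP => sp.
  move: exp; rewrite (size1_polyC sp) ev_C => /eqP; rewrite scaler_eq0 (negbTE x0) orbF.
  move=> /eqP c0; move: p0; rewrite (size1_polyC sp) c0 => /eqP; apply.
  by rewrite polyC0.
have rq : q %% p = 0.
  apply: hx; first by rewrite -ltnS prednK ?ltn_modp // lt0n size_poly_eq0.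
  have := exq; rewrite {1}(divp_eq q p) ev_add ev_mulC ev_mul exp ev_zero add0r.
  by [].
set g := q %/ p.
have qgp : q = g * p by rewrite {1}(divp_eq q p) rq addr0.
have g0 : g != 0 by apply: contra q0 => /eqP g0; rewrite qgp g0 mul0r.
have hc : indep (ev k A g) A (size p).-1.
  move=> f sf ef; apply/eqP/negPn/negP => f0.
  have : g * f = 0.
    apply: hk; last by rewrite ev_mul.
    rewrite size_mul // qgp size_mul //.
    have : (0 < size g)%N by rewrite size_poly_gt0.
    move: sf sp1; set a := size g; set b := size f; set c := size p; lia.
  by apply/eqP; rewrite mulf_neq0.
exists p, (ev k A g); split => //; split => //.
- exact: ev_sub.
- apply/negP => /eqP c0.
  have : (1 : {poly K}) = 0.
    by apply: hc; [rewrite size_poly1 -ltnS prednK // ltnW | rewrite ev1 c0].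
  by move/eqP; rewrite oner_eq0.
- by rewrite -ev_mul -qgp.
Qed.

End Core.

Lemma inj_sub_mul (K : fieldType) m n (E : 'M[K]_(m, n)) (Q : 'M[K]_n)
  (col : 'cV[K]_n) :
  (E *m Q <= E)%MS -> (forall w : 'rV_n, (w <= E)%MS -> w *m Q = 0 -> w = 0) ->
  Q *m col = 0 -> E *m col = 0.
Proof.
move=> EQ hinj Qc.
have cap0 : (E :&: kermx Q)%MS = 0.
  apply/row_matrixP => i; rewrite row0; apply: hinj.
    by apply: submx_trans (row_sub _ _) (capmxSl _ _).
  by apply/sub_kermxP; apply: submx_trans (row_sub _ _) (capmxSr _ _).
have rk : \rank (E *m Q) = \rank E.
  by have := mxrank_mul_ker E Q; rewrite cap0 mxrank0 addn0.
have /submxP [D ->] : (E <= E *m Q)%MS.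
  by case: (mxrank_leqif_sup EQ) => _ <-; rewrite rk.
by rewrite -!mulmxA Qc !mulmx0.
Qed.

Lemma rat_scale n (v : 'rV[rat]_n) : v != 0 ->
  exists w : 'rV[int]_n, w != 0 /\ exists2 D : rat, D != 0 & map_mx intr w = D *: v.
Proof.
move=> v0.
pose D : int := \prod_i denq (v 0 i).
have D0 : D != 0 by rewrite prodf_seq_neq0; apply/allP => i _; exact: denq_neq0.
exists (\row_i (numq (v 0 i) * \prod_(j | j != i) denq (v 0 j))).
have e : map_mx intr (\row_i (numq (v 0 i) * \prod_(j | j != i) denq (v 0 j))) = D%:~R *: v.
  apply/rowP => i; rewrite !mxE; set P := \prod_(j | j != i) _; rewrite (intrM _ (numq (v 0 i)) P) numqE /D (bigD1 i) //= -/P intrM.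
  by rewrite [RHS]mulrC mulrA.
split; last by exists D%:~R; rewrite ?intr_eq0.
apply: contra v0 => /eqP w0; move: e; rewrite w0 map_mx0 => /esym /eqP.
by rewrite scaler_eq0 intr_eq0 (negbTE D0).
Qed.

Section MapKry.
Variables (aF : fieldType) (rF : fieldType) (f : {rmorphism aF -> rF}) (n : nat).

Lemma map_kry (x : 'rV[aF]_n.+1) A m :
  map_mx f (kry x A m) = kry (map_mx f x) (map_mx f A) m.
Proof.
apply/row_matrixP => i; rewrite -map_row !rowK map_mxM; congr (_ *m _).
elim: (nat_of_ord i) => [|k IH]; first by rewrite !expr0 map_mx1.
by rewrite !exprS map_mxM IH.
Qed.

Lemma map_ev (x : 'rV[aF]_n.+1) A p :
  map_mx f (ev x A p) = ev (map_mx f x) (map_mx f A) (map_poly f p).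
Proof. by rewrite /ev map_mxM map_horner_mx. Qed.

Lemma map_indep (x : 'rV[aF]_n.+1) A m :
  indep x A m -> indep (map_mx f x) (map_mx f A) m.
Proof.
move=> /indep_row_free rf; apply: row_free_indep.
by rewrite /row_free -map_kry mxrank_map.
Qed.

End MapKry.

Lemma main_LA (R : realType) n (F : 'M[int]_n.+1) (S C U G : 'M[R]_n.+1)
  (kint : 'rV[int]_n.+1) :
  (S *m (Fr R F)^T <= S)%MS -> (C *m (Fr R F)^T <= C)%MS ->
  (U *m (Fr R F)^T <= U)%MS -> posdef G ->
  restr_norm G F S < restr_conorm G F C -> restr_norm G F C < restr_conorm G F U ->
  kint != 0 -> (map_mx intr kint <= C)%MS ->
  exists mint : 'cV[int]_n.+1, mint != 0 /\
    S *m map_mx intr mint = 0 /\ U *m map_mx intr mint = 0.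
Proof.
set A := (Fr R F)^T => SA CA UA pG hSC hCU k0 kC.
pose Aq : 'M[rat]_n.+1 := map_mx intr F^T.
have AqR : map_mx ratr Aq = A.
  by apply/matrixP => i j; rewrite !mxE ratr_int.
pose kq : 'rV[rat]_n.+1 := map_mx intr kint.
set kR : 'rV[R]_n.+1 := map_mx intr kint in kC.
have kqR : map_mx ratr kq = kR by apply/rowP => i; rewrite !mxE ratr_int.
have kq0 : kq != 0.
  apply: contra k0 => /eqP kq0; apply/eqP/rowP => i.
  by have := congr1 (fun r : 'rV[rat]_n.+1 => r 0 i) kq0; rewrite !mxE => /eqP; rewrite intr_eq0 => /eqP.
have hch : ev kq Aq (char_poly Aq) = 0 by rewrite /ev Cayley_Hamilton mulmx0.
have [q [q0 ekq hmin]] := min_annih (monic_neq0 (char_poly_monic _)) hch.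
have hq := min_indep q0 hmin.
pose qR : {poly R} := map_poly ratr q.
have qR0 : qR != 0 by rewrite map_poly_eq0.
have eqR : ev kR A qR = 0 by rewrite -kqR -AqR -map_ev ekq map_mx0.
have hqR : indep kR A (size qR).-1.
  by rewrite size_map_poly -kqR -AqR; exact: map_indep.
have injS : forall w, (w <= S)%MS -> ev w A qR = 0 -> w = 0.
  move=> w wS ew; apply/eqP/negPn/negP => w0.
  have [p [c [[p0 cC c0 ewp ecp] [iw ic]]]] := core kC CA qR0 eqR hqR w0 ew.
  have [X hX] := transport p0 ewp ecp iw.
  apply: (growth_contra pG hSC SA CA _ _ wS cC c0 hX).
    by move=> v vS; exact: norm_step.
  by move=> v vC; exact: conorm_step.
have injU : forall w, (w <= U)%MS -> ev w A qR = 0 -> w = 0.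
  move=> w wU ew; apply/eqP/negPn/negP => w0.
  have [p [c [[p0 cC c0 ewp ecp] [iw ic]]]] := core kC CA qR0 eqR hqR w0 ew.
  have [X hX] := transport p0 ecp ewp ic.
  apply: (growth_contra pG hCU CA UA _ _ cC wU w0 hX).
    by move=> v vC; exact: norm_step.
  by move=> v vU; exact: conorm_step.
set Q := horner_mx Aq q.
have dQ : \det Q^T = 0.
  by rewrite det_tr; apply/eqP/det0P; exists kq.
have [v v0 hv] : exists2 v : 'rV[rat]_n.+1, v != 0 & v *m Q^T = 0.
  by apply/det0P/eqP.
have [w [w0 [D D0 hw]]] := rat_scale v0.
exists w^T; split.
  by apply: contra w0 => /eqP w0; rewrite -[w]trmxK w0 trmx0.
have mRE : map_mx intr w^T = map_mx ratr (D *: v^T) :> 'cV[R]_n.+1.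
  apply/matrixP => i j; rewrite (ord1 j) !mxE.
  have := congr1 (fun r : 'rV[rat]_n.+1 => r 0 i) hw; rewrite !mxE => <-.
  by rewrite ratr_int.
have QR : horner_mx A qR *m map_mx intr w^T = 0.
  rewrite mRE -AqR -map_horner_mx -map_mxM -scalemxAr.
  have -> : Q *m v^T = 0 by rewrite -[Q]trmxK -trmx_mul hv trmx0.
  by rewrite scaler0 map_mx0.
split.
  apply: (inj_sub_mul _ _ QR); first exact: ev_sub.
  exact: injS.
apply: (inj_sub_mul _ _ QR); first exact: ev_sub.
exact: injU.
Qed.

Section Smooth.
Variables (R : realType) (d : nat) (m : 'cV[R]_d).

Definition tau : R := pi *+ 2.
Definition lin (x : 'rV[R]_d) : R := (x *m m) 0 0.
Definition fcos (c th : R) (x : 'rV[R]_d) : R := c * cos (tau * lin x + th).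
Definition phi0 (x : 'rV[R]_d) : R := cos (tau * lin x).

Lemma lin_lin h v x : lin (h *: v + x) = h * lin v + lin x.
Proof. by rewrite /lin mulmxDl -scalemxAl !mxE. Qed.

Lemma linD x y : lin (x + y) = lin x + lin y.
Proof. by rewrite /lin mulmxDl mxE. Qed.

Lemma lin_cont : continuous lin.
Proof.
have -> : lin = fun x => \sum_(i <- index_enum 'I_d) (fun i x => x 0 i * m i 0) i x.
  by apply: funext => x; rewrite /lin mxE.
apply: continuous_sum_seq => i x.
apply: continuousM; [exact: coord_continuous|exact: cst_continuous].
Qed.

Lemma fcos_cont c th : continuous (fcos c th).
Proof.
move=> x; apply: continuousM; first exact: cst_continuous.
apply: (continuous_comp (f := fun y => tau * lin y + th)); last exact: continuous_cos.
apply: continuousD; last exact: cst_continuous.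
apply: continuousM; [exact: cst_continuous|exact: lin_cont].
Qed.

Lemma lift_derive (f : 'rV[R]_d -> R) (g : R -> R) x v df :
  (forall h, f (h *: v + x) = g h) -> is_derive (0:R) 1 g df -> is_derive x v f df.
Proof.
move=> e [dg vg].
have E : (fun h : R => h^-1 *: ((f \o shift x) (h *: v) - f x)) =
         (fun h : R => h^-1 *: ((g \o shift 0) (h *: 1) - g 0)).
  apply: funext => h /=.
  have -> : f x = g 0 by rewrite -e scale0r add0r.
  by rewrite e addr0 /GRing.scale /= mulr1.
split; first by rewrite /derivable E.
by rewrite /derive E -vg.
Qed.

Lemma t1 (a b : R) : is_derive (0:R) 1 (fun h : R => h * b + a) b.
Proof.
apply: is_derive_eq.
by rewrite scale0r add0r addr0 /GRing.scale /= mulr1.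
Qed.

Lemma t2 (a b : R) : is_derive (0:R) 1 (fun h : R => cos (h * b + a)) (- sin a * b).
Proof.
have h1 := t1 a b.
have h2 : is_derive ((fun h : R => h * b + a) 0) 1 cos (- sin a).
  by rewrite mul0r add0r; exact: is_derive_cos.
exact: (@is_derive1_comp _ cos (fun h : R => h * b + a) 0 _ _ h2 h1).
Qed.

Lemma t3 (a b c : R) : is_derive (0:R) 1 (fun h : R => c * cos (h * b + a)) (c * (- sin a * b)).
Proof. exact: (is_deriveZ c (t2 a b)). Qed.

Lemma fcos_derive c th x v :
  is_derive x v (fcos c th) (fcos (c * (tau * lin v)) (th + pi / 2) x).
Proof.
have E : forall h, fcos c th (h *: v + x) =
    (fun h => c * cos (h * (tau * lin v) + (tau * lin x + th))) h.
  by move=> h; rewrite /fcos lin_lin mulrDr addrA mulrCA.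
apply: (is_derive_eq (lift_derive E (@t3 (tau * lin x + th) (tau * lin v) c))).
rewrite /fcos addrA cosD cos_pihalf sin_pihalf mulr0 mulr1 add0r.
by rewrite -mulrA [_ * - _]mulrC.
Qed.

Lemma dderiv_fcos vs : exists c th, dderiv vs phi0 = fcos c th.
Proof.
elim: vs => [|v vs [c [th IH]]].
  exists 1, 0; apply: funext => x; by rewrite /= /fcos /phi0 mul1r addr0.
exists (c * (tau * lin v)), (th + pi / 2); apply: funext => x /=.
by rewrite IH; apply: (@derive_val _ _ _ _ _ _ _ (fcos_derive c th x v)).
Qed.

Lemma phi0_smooth : smooth phi0.
Proof.
move=> vs; have [c [th ->]] := dderiv_fcos vs; split; first exact: fcos_cont.
move=> x v; exact: (@ex_derive _ _ _ _ _ _ _ (fcos_derive c th x v)).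
Qed.

End Smooth.

Section Tor.
Variables (R : realType) (d : nat).
Implicit Types (x y k v : 'rV[R]_d) (B E : 'M[R]_d).

Definition intmat B := exists Bi : 'M[int]_d, B = map_mx (fun z : int => z%:~R) Bi.

Lemma intvec_mul k B : intvec k -> intmat B -> intvec (k *m B).
Proof.
move=> [ki ->] [Bi ->]; exists (ki *m Bi).
by rewrite (map_mxM (intr : {rmorphism int -> R})).
Qed.

Lemma intvec_add k1 k2 : intvec k1 -> intvec k2 -> intvec (k1 + k2).
Proof.
move=> [a ->] [b ->]; exists (a + b).
by rewrite (map_mxD (intr : {rmorphism int -> R})).
Qed.

Lemma intvec_opp k : intvec k -> intvec (- k).
Proof.
move=> [a ->]; exists (- a).
by rewrite (map_mxN (intr : {rmorphism int -> R})).
Qed.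

Lemma intmat_exp B n : intmat B -> intmat (B ^+ n).
Proof.
move=> [Bi ->]; exists (Bi ^+ n); elim: n => [|n IH].
  by rewrite !expr0 (map_mx1 (intr : {rmorphism int -> R})).
by rewrite !exprS IH (map_mxM (intr : {rmorphism int -> R})).
Qed.

Lemma intmat_A (F : 'M[int]_d) : intmat (Fr R F)^T.
Proof. by exists F^T; rewrite /Fr map_trmx. Qed.

Lemma intmat_Ainv (F : 'M[int]_d) : \det F = 1 -> intmat (invmx (Fr R F))^T.
Proof.
move=> dF; exists (\adj F)^T; rewrite -map_trmx; congr trmx.
have dFr : \det (Fr R F) = 1.
  by rewrite /Fr (det_map_mx (intr : {rmorphism int -> R})) dF.
rewrite /invmx unitmxE dFr unitr1 invr1 scale1r.
by rewrite /Fr (map_mx_adj (intr : {rmorphism int -> R})).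
Qed.

Variable (mint : 'cV[int]_d).
Local Notation m := (map_mx (fun z : int => z%:~R) mint : 'cV[R]_d).
Local Notation phi := (phi0 m).

Lemma lin_int k : intvec k -> exists z : int, lin m k = z%:~R.
Proof.
move=> [ki ->]; exists ((ki *m mint) 0 0).
by rewrite /lin -(map_mxM (intr : {rmorphism int -> R})) mxE.
Qed.

Lemma cs_nat (n : nat) : cos (tau R * n%:R) = 1 /\ sin (tau R * n%:R) = 0 :> R.
Proof.
elim: n => [|n [c s]]; first by rewrite mulr0 cos0 sin0.
rewrite -natr1 mulrDr mulr1; split.
  by rewrite cosD c s /tau cos2pi mul1r mul0r subr0.
by rewrite sinD c s /tau cos2pi sin2pi mul0r mul1r add0r.
Qed.

Lemma cos_int (z : int) (y : R) : cos (y + tau R * z%:~R) = cos y :> R.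
Proof.
have [c s] : cos (tau R * z%:~R) = 1 /\ sin (tau R * z%:~R) = 0 :> R.
  case: z => n; first exact: cs_nat.
  rewrite NegzE mulrNz mulrN cosN sinN; have [c s] := cs_nat n.+1.
  by rewrite c s oppr0.
by rewrite cosD c s mulr1 mulr0 subr0.
Qed.

Lemma phi_shift x v k : lin m v = 0 -> intvec k -> phi (x + v + k) = phi x.
Proof.
move=> v0 ik; have [z hz] := lin_int ik.
by rewrite /phi0 !linD v0 addr0 hz mulrDr cos_int.
Qed.

Lemma phi_periodic : Zperiodic phi.
Proof.
move=> x k ik; have := @phi_shift x 0 k; rewrite addr0; apply => //.
by rewrite /lin mul0mx mxE.
Qed.

Lemma lin_sub0 E v : (v <= E)%MS -> E *m m = 0 -> lin m v = 0.
Proof. by move=> /submxP [D ->] Em; rewrite /lin -mulmxA Em mulmx0 mxE. Qed.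

Lemma sub_exp E B v n : (E *m B <= E)%MS -> (v <= E)%MS -> (v *m B ^+ n <= E)%MS.
Proof.
move=> EB vE; elim: n => [|n IH]; first by rewrite expr0 mulmx1.
by rewrite exprSr mulmxA; apply: submx_trans (submxMr _ IH) EB.
Qed.

Lemma lim_series0 (u : nat -> R) : (forall n, u n = 0) -> limn (series u) = 0.
Proof.
move=> u0; have -> : series u = fun=> 0.
  by apply: funext => n; rewrite /series /= big1 // => i _; exact: u0.
exact: lim_cst.
Qed.

Lemma PCF0 (F : 'M[int]_d) S U : \det F = 1 ->
  (S *m (Fr R F)^T <= S)%MS -> (U *m (invmx (Fr R F))^T <= U)%MS ->
  S *m m = 0 -> U *m m = 0 ->
  forall legs x0, su_path S U x0 legs -> PCF F phi x0 legs = 0.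
Proof.
move=> dF SA UA Sm Um; elim => [//|[b y] l IH] x0 /= [[v [k [vE [ik ->]]]] hl].
rewrite IH // addr0; case: b vE => vE.
  rewrite /HolS; apply: lim_series0 => n.
  rewrite /Fpow !mulmxDl phi_shift ?subrr //.
    exact: lin_sub0 (sub_exp _ SA vE) Sm.
  exact: intvec_mul (intmat_exp _ (intmat_A F)).
rewrite /HolU lim_series0 ?oppr0 // => n.
rewrite /Finvpow !mulmxDl phi_shift ?subrr //.
  exact: lin_sub0 (sub_exp _ UA vE) Um.
exact: intvec_mul (intmat_exp _ (intmat_Ainv dF)).
Qed.

End Tor.

Section Fin.
Variables (R : realType) (d : nat) (F : 'M[int]_d) (mint : 'cV[int]_d).
Local Notation m := (map_mx (fun z : int => z%:~R) mint : 'cV[R]_d).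
Local Notation phi := (phi0 m).
Local Notation A := ((Fr R F)^T).

Lemma powA_inv t : \det F = 1 -> A ^+ t *m (invmx (Fr R F))^T ^+ t = 1%:M.
Proof.
move=> dF.
have uA : A \in unitmx.
  rewrite unitmxE det_tr /Fr (det_map_mx (intr : {rmorphism int -> R})) dF.
  by rewrite rmorph1 unitr1.
rewrite trmx_inv; elim: t => [|t IH]; first by rewrite !expr0 mulmx1.
rewrite exprSr exprS !mulmxE -mulrA (mulrA A) -!mulmxE mulmxV //.
by rewrite mul1mx.
Qed.

Lemma no_coboundary : \det F = 1 -> mint != 0 ->
  forall u : 'rV[R]_d -> R, Zperiodic u -> forall K : R,
  (forall x, phi x = u (Fpow F 1 x) - u x + K) -> False.
Proof.
move=> dF m0 u up K hc.
have FA : forall x, Fpow F 1 x = x *m A by move=> x; rewrite /Fpow expr1.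
have K1 : K = 1.
  have := hc 0; rewrite FA mul0mx subrr add0r /phi0 /lin mul0mx mxE mulr0 cos0.
  by move->.
have [i hi] : exists i, mint i 0 != 0.
  case: (pselect (exists i, mint i 0 != 0)) => // h; exfalso; move/eqP: m0; apply.
  apply/matrixP => a b; rewrite (ord1 b) mxE; apply/eqP/negPn/negP => ha; apply: h.
  by exists a.
set Nn : int := mint i 0 *+ 2.
have Nn0 : Nn != 0 by rewrite mulrn_eq0 (negbTE hi).
have NnR : (Nn%:~R : R) != 0 by rewrite intr_eq0.
set p : 'rV[R]_d := (Nn%:~R)^-1 *: 'e_i.
have phip : phi p = -1.
  rewrite /phi0 /lin -scalemxAl -rowE !mxE /Nn.
  have -> : (mint i 0 *+ 2)%:~R^-1 * (mint i 0)%:~R = 2^-1 :> R.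
    rewrite (raddfMn (intr : {rmorphism int -> R})) /=.
    have e : forall a : R, a != 0 -> (a *+ 2)^-1 * a = 2^-1.
      by move=> a a0; rewrite [in LHS]mulrC -[in LHS]mulr_natr invfM mulrA mulfV ?mul1r.
    by rewrite e // intr_eq0.
  have -> : tau R * 2^-1 = pi by rewrite /tau; lra.
  exact: cospi.
set P := fun t : nat => p *m A ^+ t.
have hP : forall t, phi (P t) = u (P t.+1) - u (P t) + 1.
  by move=> t; rewrite hc FA K1 /P -mulmxA [A ^+ t.+1]exprSr.
have H : forall a b : nat, (a < b)%N -> intvec (P b - P a) -> False.
  move=> a b ab ib.
  set n := (b - a)%N.
  have ba : b = (n + a)%N by rewrite /n subnK // ltnW.
  have iq : intvec (P n - P 0).
    have -> : P n - P 0 = (P b - P a) *m (invmx (Fr R F))^T ^+ a.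
      rewrite /P expr0 mulmx1 ba exprD mulmxA -mulmxBl -mulmxA powA_inv //.
      by rewrite mulmx1.
    exact: intvec_mul ib (intmat_exp a (intmat_Ainv R dF)).
  have sumE : \sum_(0 <= t < n) phi (P t) = n%:R.
    rewrite (eq_bigr _ (fun t _ => hP t)) big_split /= telescope_sumr //.
    rewrite sumr_const_nat subn0.
    have -> : P n = P 0 + (P n - P 0) by rewrite addrC subrK.
    by rewrite up // subrr add0r.
  have n0 : (0 < n)%N by rewrite /n subn_gt0.
  have [n' nE] : exists n', n = n'.+1 by exists n.-1; rewrite prednK.
  move: sumE; rewrite nE big_nat_recl //.
  have P0 : P 0 = p by rewrite /P expr0 mulmx1.
  rewrite P0 phip.
  have : \sum_(0 <= t < n') phi (P t.+1) <= n'%:R.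
    apply: (@le_trans _ _ (\sum_(0 <= t < n') (1:R))).
      by apply: ler_sum => t _; exact: cos_le1.
    by rewrite sumr_const_nat subn0.
  move=> h1 h2; move: h1; rewrite -natr1 in h2.
  lra.
set Aint : 'M[int]_d := F^T.
have AR : A = map_mx (fun z : int => z%:~R) Aint by rewrite /Fr map_trmx.
set W := fun t : nat => ('e_i : 'rV[int]_d) *m Aint ^+ t.
have AtR : forall t, A ^+ t = map_mx (fun z : int => z%:~R) (Aint ^+ t).
  elim=> [|t IH]; first by rewrite !expr0 (map_mx1 (intr : {rmorphism int -> R})).
  by rewrite !exprS IH AR (map_mxM (intr : {rmorphism int -> R})).
have eR : map_mx (fun z : int => z%:~R) ('e_i : 'rV[int]_d) = 'e_i :> 'rV[R]_d.
  apply/rowP => k; rewrite !mxE; case: (_ && _) => /=.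
    exact: (rmorph1 (intr : {rmorphism int -> R})).
  exact: (rmorph0 (intr : {rmorphism int -> R})).
have Pe : forall t j, P t 0 j = (Nn%:~R)^-1 * (W t 0 j)%:~R.
  move=> t j.
  have -> : P t = (Nn%:~R)^-1 *: map_mx (fun z : int => z%:~R) (W t).
    rewrite /P /p -scalemxAl; congr (_ *: _).
    by rewrite /W (map_mxM (intr : {rmorphism int -> R})) eR AtR.
  by rewrite !mxE.
have iv : forall a b : nat, (forall j, (Nn %| W b 0%R j - W a 0%R j)%Z) -> intvec (P b - P a).
  move=> a b hd; exists (\row_j ((W b 0%R j - W a 0%R j) %/ Nn)%Z).
  apply/rowP => j.
  have -> : (P b - P a) 0 j = P b 0 j - P a 0 j by rewrite !mxE.
  rewrite [in RHS]mxE [in RHS]mxE !Pe -mulrBr.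
  rewrite -(rmorphB (intr : {rmorphism int -> R})) /= -{1}(divzK (hd j)).
  rewrite (rmorphM (intr : {rmorphism int -> R})) /=.
  by rewrite mulrC -mulrA mulfV // mulr1.
pose N := absz Nn.
pose T := {ffun 'I_d -> 'I_N.+1}.
pose f := fun t : 'I_(#|{: T}|.+1) => [ffun j => inord (absz ((W t 0%R j) %% Nn)%Z)] : T.
have [t1 [t2 [e ne]]] : exists t1 t2, f t1 = f t2 /\ t1 != t2.
  case: (pselect (exists t1 t2, f t1 = f t2 /\ t1 != t2)) => // h; exfalso.
  have inj : injective f.
    move=> x y exy; apply/eqP/negPn/negP => nxy; apply: h; by exists x, y.
  by have := @leq_card _ _ f inj; rewrite card_ord ltnn.
have bnd : forall a : int, (absz (a %% Nn)%Z < N.+1)%N.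
  move=> a; have h1 := modz_ge0 a Nn0; have h2 := ltz_mod a Nn0.
  rewrite /N; move: h1 h2; set r := (a %% Nn)%Z; lia.
have dv : forall j, (Nn %| W t2 0%R j - W t1 0%R j)%Z.
  move=> j; have := congr1 (fun g : T => val (g j)) e; rewrite /f !ffunE /= !inordK //.
  move=> /(congr1 Posz); rewrite !gez0_abs ?modz_ge0 // => hm.
  by rewrite -eqz_mod_dvd hm.
case: (ltngtP t1 t2) => [lt|lt|eq12].
- exact: H lt (iv _ _ dv).
- apply: H lt _; rewrite -opprB; apply: intvec_opp; exact: iv.
- by move: ne; rewrite (val_inj eq12) eqxx.
Qed.


End Fin.

Lemma inv_stable (R : realType) n (E A : 'M[R]_n) :
  (E *m A <= E)%MS -> A \in unitmx -> (E *m invmx A <= E)%MS.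
Proof.
move=> EA uA.
have rk : \rank (E *m A) = \rank E by rewrite mxrankMfree // row_free_unit.
have EEA : (E <= E *m A)%MS by case: (mxrank_leqif_sup EA) => _ <-; rewrite rk.
by have := submxMr (invmx A) EEA; rewrite mulmxK.
Qed.

Theorem theorem3p2 (R : realType) (d : nat) (F : 'M[int]_d)
    (S C U : 'M[R]_d) :
  \det F = 1 ->
  partially_hyperbolic F S C U ->
  (forall phi : 'rV[R]_d -> R,
     smooth phi -> Zperiodic phi ->
     (forall (x0 : 'rV[R]_d) (legs : seq (bool * 'rV[R]_d)),
        su_cycle S U x0 legs -> PCF F phi x0 legs = 0) ->
     exists u : 'rV[R]_d -> R, Zperiodic u /\
       exists K : R, forall x : 'rV[R]_d,
         phi x = u (Fpow F 1 x) - u x + K) ->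
  katznelson_irreducible C.
Proof.
move=> dF [[_ [_ [SA [CA UA]]]] [_ [_ [_ [G [pG [_ [_ [hSC hCU]]]]]]]]] hyp k ik kC.
apply/eqP/negPn/negP => k0.
case: d F S C U dF SA CA UA G pG hSC hCU hyp k ik kC k0 => [|n] F S C U dF SA CA UA G pG hSC hCU hyp k ik kC k0.
  by move/eqP: k0; apply; apply/rowP => -[].
have [kint kE] := ik.
have kint0 : kint != 0.
  by apply: contra k0 => /eqP e; rewrite kE e map_mx0.
rewrite kE in kC.
have [mint [m0 [Sm Um]]] := main_LA SA CA UA pG hSC hCU kint0 kC.
have uA : (Fr R F)^T \in unitmx.
  rewrite unitmxE det_tr /Fr (det_map_mx (intr : {rmorphism int -> R})) dF.
  by rewrite rmorph1 unitr1.
have UAi : (U *m (invmx (Fr R F))^T <= U)%MS by rewrite trmx_inv; exact: inv_stable.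
have [u [up [K hK]]] := hyp (phi0 (map_mx (fun z : int => z%:~R) mint))
  (phi0_smooth _) (phi_periodic mint) (fun x0 legs hc => PCF0 dF SA UAi Sm Um hc.1).
by have := no_coboundary dF m0 up hK.
Qed.
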